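(* Let $(\Omega,\mathcal F)$ be a measurable space, $\mathcal X$ the set of bounded measurable functions, and $v$ a binary capacity with null set $\mathcal C_v=\{A\in\mathcal F: v(A)=0\}$. Then the Choquet integral $I_v:\mathcal X\to\mathbb R$ is convex (i.e. $I_v(\lambda X+(1-\lambda)Y)\le\lambda I_v(X)+(1-\lambda)I_v(Y)$ for all $\lambda\in[0,1]$, $X,Y\in\mathcal X$) if and only if $\mathcal C_v$ is closed under union (i.e. $A,B\in\mathcal C_v$ implies $A\cup B\in\mathcal C_v$).
   Context: A binary capacity is an increasing function $v:\mathcal F\to\{0,1\}$ (i.e. $v(A)\le v(B)$ for $A\subseteq B$) with $v(\varnothing)=0$, $v(\Omega)=1$. $I_v(X)=\int_{-\infty}^0(v(X\ge x)-1)\,\mathrm dx+\int_0^\infty v(X\ge x)\,\mathrm dx$. *)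

(* Defs.v *)
From HB Require Import structures.
From mathcomp Require Import all_boot all_order all_algebra.
From mathcomp Require Import all_classical all_reals all_analysis.
Set Implicit Arguments. Unset Strict Implicit. Unset Printing Implicit Defensive.
Import Order.TTheory GRing.Theory Num.Theory.
Local Open Scope classical_set_scope.
Local Open Scope ring_scope.

(* A binary capacity on the measurable space (T, F): a set function defined
   (meaningfully) on measurable sets, with values in {0,1}, increasing,
   v(empty) = 0 and v(Omega) = 1. Values on non-measurable sets are irrelevant. *)
Definition binary_capacity d (T : measurableType d) (R : realType)
  (v : set T -> R) : Prop :=
  [/\ (forall A, measurable A -> v A = 0 \/ v A = 1),
      (forall A B, measurable A -> measurable B -> A `<=` B -> v A <= v B),
      v set0 = 0 & v setT = 1].

Definition bounded_measurable d (T : measurableType d) (R : realType)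
  (X : T -> R) : Prop :=
  measurable_fun setT X /\ exists M : R, forall w, `|X w| <= M.

Definition choquet d (T : measurableType d) (R : realType)
  (v : set T -> R) (X : T -> R) : R :=
  Rintegral lebesgue_measure `]-oo, 0[%classic
    (fun x => v [set w | x <= X w] - 1)
  + Rintegral lebesgue_measure `[0, +oo[%classic
    (fun x => v [set w | x <= X w]).

Definition null_sets_union_closed d (T : measurableType d) (R : realType)
  (v : set T -> R) : Prop :=
  forall A B, measurable A -> measurable B -> v A = 0 -> v B = 0 ->
    v (A `|` B) = 0.

(* Main.v *)
Require Import Defs.
From HB Require Import structures.
From mathcomp Require Import all_boot all_order all_algebra.
From mathcomp Require Import all_classical all_reals all_analysis.
From mathcomp Require Import lra.
Import Order.TTheory GRing.Theory Num.Theory.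
Local Open Scope classical_set_scope.
Local Open Scope ring_scope.
Set Implicit Arguments. Unset Strict Implicit. Unset Printing Implicit Defensive.

Lemma int_step (R : realType) (b : bool) (s : R) :
  Rintegral lebesgue_measure `]-oo, 0[%classic (fun x => - \1_[set` Interval (BSide b s) +oo%O] x)
  + Rintegral lebesgue_measure `[0, +oo[%classic (fun x => \1_[set` Interval -oo%O (BSide b s)] x) = s.
Proof.
rewrite /Rintegral.
under eq_integral do rewrite EFinN.
rewrite integralN; last first.
  rewrite (_ : (\int[lebesgue_measure]_(x in `]-oo, 0%R[%classic) (fun x => (\1_[set` Interval (BSide b s) +oo%O] x)%:E)^\- x)%E = 0).
    by rewrite fin_num_adde_defl.
  rewrite -(integral0 lebesgue_measure `]-oo, 0%R[%classic).
  apply: eq_integral => x _; rewrite funenegE /=.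
  rewrite indicE; case: (_ \in _); rewrite /=.
    by apply/max_idPr; rewrite lee_fin lerN10.
  by rewrite oppr0 maxxx.
rewrite !integral_indic//; try exact: measurable_itv.
rewrite -!set_itvI /Order.meet/= joinx0 meet1x join0x meetx1 !lebesgue_measure_itv/=.
rewrite !lte_fin; case: ltrgtP => s0 /=; rewrite ?sub0r ?subr0 /=; lra.
Qed.

Lemma lvl_meas d (T : measurableType d) (R : realType) (X : T -> R) (x : R) :
  measurable_fun setT X -> measurable [set w | x <= X w].
Proof.
move=> mX.
have -> : [set w | x <= X w] = X @^-1` `[x, +oo[%classic.
  by apply/seteqP; split=> w /=; rewrite in_itv /= andbT.
by rewrite -(setTI (X @^-1` _)); apply: mX => //; exact: measurable_itv.
Qed.

Lemma choquet_eq d (T : measurableType d) (R : realType) (v : set T -> R) (X : T -> R) :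
  binary_capacity v -> bounded_measurable X ->
  choquet v X = sup [set x | v [set w | x <= X w] = 1].
Proof.
move=> [vb vm v0 vT] [mX [M hM]].
set g := fun x => v [set w | x <= X w].
have gb x : g x = 0 \/ g x = 1 := vb _ (lvl_meas x mX).
have gm x y : x <= y -> g y <= g x.
  move=> xy; apply: vm; try exact: lvl_meas.
  by move=> w /= yX; exact: le_trans xy yX.
have g1 x : x <= - M -> g x = 1.
  move=> xM; rewrite /g (_ : [set w | _] = setT) //; apply/seteqP; split => w //= _.
  by have := hM w; rewrite ler_norml => /andP[h _]; exact: le_trans xM h.
have g0 x : M < x -> g x = 0.
  move=> Mx; rewrite /g (_ : [set w | _] = set0) //; apply/seteqP; split => w //= h.
  have := hM w; rewrite ler_norml => /andP[_ h2].
  by have := lt_le_trans Mx (le_trans h h2); rewrite ltxx.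
have hS : has_sup [set x | g x = 1].
  split; first by exists (-M); exact: g1.
  exists M => y Sy; rewrite leNgt; apply/negP => My; move: Sy.
  by rewrite /= g0 // => /esym/eqP; rewrite oner_eq0.
rewrite -/g.
set s := sup _.
have glt x : x < s -> g x = 1.
  move=> xs; have sx0 : 0 < s - x by rewrite subr_gt0.
  have [e Se xe] := sup_adherent sx0 hS.
  have xe' : x < e by move: xe; rewrite (_ : sup _ = s) //; lra.
  have := gm _ _ (ltW xe'); move: Se => /= ->; case: (gb x) => -> //.
  by rewrite ler10.
have ggt x : s < x -> g x = 0.
  move=> sx; case: (gb x) => // gx1; have := sup_upper_bound hS gx1.
  by rewrite -/s leNgt sx.
have key b : g s = (if b then 0 else 1) -> choquet v X = s.
{ move=> hb; rewrite /choquet -[RHS](int_step b s); congr (_ + _);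
    apply: eq_Rintegral => x _; rewrite -/(g x);
    case: (ltgtP x s) => [xs|sx|->].
  - rewrite glt // indicE mem_setE in_itv /= ?andbT; case: b hb => hb /=;
    by rewrite ?(leNgt s x) ?(ltNge s x) ?xs ?(ltW xs) /= ?mulr0n ?subrr ?oppr0.
  - rewrite ggt // indicE mem_setE in_itv /= ?andbT; case: b hb => hb /=;
    by rewrite ?sx ?(ltW sx) /= ?mulr1n ?sub0r.
  - rewrite hb indicE mem_setE in_itv /= ?andbT; case: b hb => hb /=;
    by rewrite ?lexx ?ltxx /= ?mulr1n ?mulr0n ?sub0r ?subrr ?oppr0.
  - rewrite glt // indicE mem_setE in_itv /= ?andbT; case: b hb => hb /=;
    by rewrite ?xs ?(ltW xs).
  - rewrite ggt // indicE mem_setE in_itv /= ?andbT; case: b hb => hb /=;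
    by rewrite ?(leNgt x s) ?(ltNge x s) ?sx ?(ltW sx).
  - rewrite hb indicE mem_setE in_itv /= ?andbT; case: b hb => hb /=;
    by rewrite ?lexx ?ltxx. }
by case: (gb s) => h; [apply: (key true) | apply: (key false)].
Qed.


Lemma hasS d (T : measurableType d) (R : realType) (v : set T -> R) (X : T -> R) :
  binary_capacity v -> bounded_measurable X ->
  has_sup [set x | v [set w | x <= X w] = 1].
Proof.
move=> [vb vm v0 vT] [mX [M hM]].
split.
  exists (-M); rewrite /= (_ : [set w | _] = setT) //; apply/seteqP; split => w //= _.
  by have := hM w; rewrite ler_norml => /andP[h _].
exists M => y /= Sy; rewrite leNgt; apply/negP => My; move: Sy.
rewrite (_ : [set w | _] = set0) ?v0; last first.
  apply/seteqP; split => w //= h.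
  have := hM w; rewrite ler_norml => /andP[_ h2].
  by have := lt_le_trans My (le_trans h h2); rewrite ltxx.
by move=> /eqP; rewrite eq_sym oner_eq0.
Qed.

Lemma choquet_le d (T : measurableType d) (R : realType) (v : set T -> R) (X : T -> R) (c : R) :
  binary_capacity v -> bounded_measurable X ->
  (forall x, c < x -> v [set w | x <= X w] = 0) -> choquet v X <= c.
Proof.
move=> hv hX H; rewrite choquet_eq //; apply: ge_sup; first exact: (hasS hv hX).1.
move=> y /= hy; rewrite leNgt; apply/negP => cy; move: hy; rewrite H //.
by move=> /eqP; rewrite eq_sym oner_eq0.
Qed.

Lemma choquet_ge d (T : measurableType d) (R : realType) (v : set T -> R) (X : T -> R) (c : R) :
  binary_capacity v -> bounded_measurable X ->
  (forall x, x <= c -> v [set w | x <= X w] = 1) -> c <= choquet v X.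
Proof.
move=> hv hX H; rewrite choquet_eq //; apply: sup_upper_bound; first exact: hasS.
exact: H.
Qed.

Lemma bm_comb d (T : measurableType d) (R : realType) (l : R) (X Y : T -> R) :
  bounded_measurable X -> bounded_measurable Y ->
  bounded_measurable (fun w => l * X w + (1 - l) * Y w).
Proof.
move=> [mX [MX hX]] [mY [MY hY]]; split.
  rewrite (_ : (fun w => _) = (cst l \* X) \+ (cst (1 - l) \* Y)) //.
  by apply: measurable_realfun.measurable_funD; apply: measurable_realfun.measurable_funM => //; exact: measurable_cst.
exists (`|l| * MX + `|1 - l| * MY) => w.
rewrite (le_trans (ler_normD _ _)) // lerD // normrM ler_wpM2l //.
Qed.

Lemma bm_indic d (T : measurableType d) (R : realType) (A : set T) :
  measurable A -> bounded_measurable (\1_A : T -> R).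
Proof.
move=> mA; split; first exact: measurable_realfun.measurable_indic.
by exists 1 => w; rewrite indicE; case: (w \in A); rewrite /= ?normr1 ?normr0.
Qed.

Unset Implicit Arguments.

Theorem proposition4 (d : measure_display) (T : measurableType d)
  (R : realType) (v : set T -> R) :
  binary_capacity v ->
  ((forall (l : R) (X Y : T -> R), 0 <= l <= 1 ->
      bounded_measurable X -> bounded_measurable Y ->
      choquet v (fun w => l * X w + (1 - l) * Y w)
        <= l * choquet v X + (1 - l) * choquet v Y)
   <-> null_sets_union_closed v).
Proof.
move=> hv; have [vb vm v0 vT] := hv.
have to0 (E F : set T) : measurable E -> measurable F -> E `<=` F -> v F = 0 -> v E = 0.
  move=> mE mF EF vF; have := vm _ _ mE mF EF; rewrite vF.
  by case: (vb _ mE) => -> //; rewrite ler10.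
have to1 (E F : set T) : measurable E -> measurable F -> E `<=` F -> v E = 1 -> v F = 1.
  move=> mE mF EF vE; have := vm _ _ mE mF EF; rewrite vE.
  by case: (vb _ mF) => -> //; rewrite ler10.
split.
- move=> conv A B mA mB vA vB.
  case: (vb _ (measurableU _ _ mA mB)) => // vAB; exfalso.
  have bA : bounded_measurable (\1_A : T -> R) by exact: bm_indic.
  have bB : bounded_measurable (\1_B : T -> R) by exact: bm_indic.
  have h1 : (0:R) <= 1/2 by lra.
  have h2 : (1/2 : R) <= 1 by lra.
  have := conv (1/2) _ _ _ bA bB; rewrite h1 h2 => /(_ isT).
  have cA : choquet v \1_A <= 0.
    apply: choquet_le => // x x0; apply: (to0 _ A) => //; first exact: lvl_meas bA.1.
    move=> w /=; rewrite indicE; case: (boolP (w \in A)) => [/set_mem //|_] /=.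
    by move=> h; exfalso; move: h; rewrite leNgt x0.
  have cB : choquet v \1_B <= 0.
    apply: choquet_le => // x x0; apply: (to0 _ B) => //; first exact: lvl_meas bB.1.
    move=> w /=; rewrite indicE; case: (boolP (w \in B)) => [/set_mem //|_] /=.
    by move=> h; exfalso; move: h; rewrite leNgt x0.
  have cZ : 1/2 <= choquet v (fun w => 1/2 * \1_A w + (1 - 1/2) * \1_B w).
    apply: choquet_ge => //; first exact: bm_comb.
    move=> x x12; apply: (to1 (A `|` B)) => //; first exact: measurableU.
      exact: lvl_meas (bm_comb _ bA bB).1.
    move=> w /= [wA|wB]; rewrite !indicE.
      rewrite (mem_set wA); case: (w \in B) => /=; lra.
    rewrite (mem_set wB); case: (w \in A) => /=; lra.
  lra.
- move=> hU l X Y /andP[l0 l1] bX bY.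
  set a := choquet v X; set b := choquet v Y.
  apply/ler_addgt0Pr => e e0.
  have mX := bX.1; have mY := bY.1; have mZ := (bm_comb l bX bY).1.
  have hXa : v [set w | a + e <= X w] = 0.
    case: (vb _ (lvl_meas (a + e) mX)) => // h1.
    have : a + e <= a.
      apply: choquet_ge => // x xae; apply: (to1 _ _ (lvl_meas (a + e) mX)) => //.
        exact: lvl_meas.
      by move=> w /= h; exact: le_trans xae h.
    lra.
  have hYb : v [set w | b + e <= Y w] = 0.
    case: (vb _ (lvl_meas (b + e) mY)) => // h1.
    have : b + e <= b.
      apply: choquet_ge => // x xae; apply: (to1 _ _ (lvl_meas (b + e) mY)) => //.
        exact: lvl_meas.
      by move=> w /= h; exact: le_trans xae h.
    lra.
  have hU' := hU _ _ (lvl_meas _ mX) (lvl_meas _ mY) hXa hYb.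
  apply: choquet_le => //; first exact: bm_comb.
  move=> x hx; apply: (to0 _ _ _ _ _ hU') => //.
    exact: lvl_meas mZ.
    by apply: measurableU; exact: lvl_meas.
  move=> w /= hw.
  case: (leP (a + e) (X w)) => h1; first by left.
  case: (leP (b + e) (Y w)) => h2; first by right.
  exfalso.
  have h3 : l * X w <= l * (a + e) by apply: ler_wpM2l => //; exact: ltW.
  have h4 : (1 - l) * Y w <= (1 - l) * (b + e).
    by apply: ler_wpM2l; [lra | exact: ltW].
  nra.
Qed.
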